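(* The linear map $\phi':\mathcal{H}_{WPP}\to\mathbf{WQSym}$ defined by $\phi'(P)=\sum_{g\in WLin(P)} g$ is a Hopf algebra isomorphism from $\mathcal{H}_{WPP}$ onto $(\mathbf{WQSym},.,\Delta)$; moreover $\phi'=\psi\circ\phi$, where $\phi(P)=\sum_{f\in Lin(P)}f$ and $\psi(f)=\sum_{g\prec f} g$.
   Context: A double poset is a finite set with two partial orders $\leq_1,\leq_2$. A weak plane poset is a double poset such that $x\leq_1 y$ and $x\leq_2 y$ imply $x=y$, and $x\preceq y\iff(x\leq_1 y$ or $x\leq_2 y)$ is a total quasi-order; $x\equiv y$ means $x\preceq y$ and $y\preceq x$; $x\ll y\iff(y\leq_1 x$ or $x\leq_2 y)$ is a total order, and $P$ is identified with $[n]$ so that $\ll$ is the natural order. $\mathcal{H}_{WPP}$ is the span of isomorphism classes of weak plane posets, with product $PQ$ on $P\sqcup Q$ ($\leq_1$ the disjoint union; $i\leq_2 j$ iff $i,j$ in the same factor and $i\leq_2 j$ there, or $i\in P,j\in Q$), unit the empty poset, and coproduct $\Delta(P)=\sum_O P_{|P\setminus O}\otimes P_{|O}$ over subsets $O$ upward closed for $\leq_1$. $Lin(P)$: surjections $f:[n]\to[k]$ with $i\leq_1 j\Rightarrow f(i)\leq f(j)$ and $f(i)=f(j)\Rightarrow i\equiv j$. $WLin(P)$: surjections $f:[n]\to[k]$ with $i\leq_1 j\Rightarrow f(i)\leq f(j)$ and ($i\leq_1 j$ and $f(i)=f(j)$) $\Rightarrow i\equiv j$. Surjections are identified with packed words $f(1)\cdots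 f(n)$ (words whose letters form $\{1,\dots,k\}$), which form a basis of $\mathbf{WQSym}$. For packed words $f,g$ of length $n$, $g\prec f$ means: $f(i)\leq f(j)\Rightarrow g(i)\leq g(j)$, and ($i<j$, $f(i)>f(j)$) $\Rightarrow g(i)>g(j)$. $pack$ replaces the letters of a word by their ranks. The product $.$ is $u.v=\sum w$ over packed words $w$ of length $|u|+|v|$ with $pack(w_1\cdots w_{|u|})=u$ and $pack(w_{|u|+1}\cdots)=v$ (e.g. $(1).(1)=(12)+(21)+(11)$). The coproduct is $\Delta(w)=\sum_{k=0}^{\max w} w_{|\leq k}\otimes pack(w_{|>k})$, with $w_{|\leq k}$, $w_{|>k}$ the subwords of letters $\leq k$, $>k$. *)

(* Defs.v *)
From HB Require Import structures.
From mathcomp Require Import all_boot all_order all_algebra.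
Set Implicit Arguments. Unset Strict Implicit. Unset Printing Implicit Defensive.
Import Order.TTheory GRing.Theory Num.Theory.

(* Formal finite linear combinations  sum_i c_i b_i  over a basis B.   *)
(* Two formal sums denote the same vector iff their coefficient        *)
(* functions agree.                                                    *)
Definition fsum (K : Type) (B : Type) := seq (K * B).

Section FSum.
Variable K : nzRingType.
Local Open Scope ring_scope.

Definition coef {B : eqType} (x : fsum K B) (b : B) : K :=
  \sum_(p <- x | p.2 == b) p.1.

Definition lin {B C : Type} (f : B -> fsum K C) (x : fsum K B) : fsum K C :=
  flatten [seq [seq (p.1 * q.1, q.2) | q <- f p.2] | p <- x].

Definition tens {B C : Type} (x : fsum K B) (y : fsum K C) : fsum K (B * C) :=
  [seq (p.1 * q.1, (p.2, q.2)) | p <- x, q <- y].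

Definition lin2 {B C D E : Type} (f : B -> fsum K D) (g : C -> fsum K E)
  (x : fsum K (B * C)) : fsum K (D * E) :=
  lin (fun bc => tens (f bc.1) (g bc.2)) x.

Definition ones {B : Type} (s : seq B) : fsum K B := [seq (1, b) | b <- s].
End FSum.

(* Double posets on [n] = {0,..,n-1} (position i stands for i+1).      *)
(* A double poset is (n, (R1, R2)) with R1, R2 the graphs of <=_1 and  *)
(* <=_2.  A weak plane poset is stored in its unique normal form where *)
(* << is the natural order of [n]; these normal forms are in bijection *)
(* with isomorphism classes of weak plane posets.       *)
Definition dpT (n : nat) : finType := ({set 'I_n * 'I_n} * {set 'I_n * 'I_n})%type.
Definition dposet := {n : nat & dpT n}.

Definition dsize (P : dposet) : nat := projT1 P.
Definition le1 (P : dposet) (i j : 'I_(dsize P)) : bool := (i, j) \in (projT2 P).1.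
Definition le2 (P : dposet) (i j : 'I_(dsize P)) : bool := (i, j) \in (projT2 P).2.
Definition qle (P : dposet) (i j : 'I_(dsize P)) : bool := le1 i j || le2 i j.
Definition qeq (P : dposet) (i j : 'I_(dsize P)) : bool := qle i j && qle j i.

Arguments le1 : clear implicits.
Arguments le2 : clear implicits.
Arguments qle : clear implicits.
Arguments qeq : clear implicits.

Definition is_porder (n : nat) (r : 'I_n -> 'I_n -> bool) : bool :=
  [&& [forall i, r i i],
      [forall i, forall j, r i j && r j i ==> (i == j)] &
      [forall i, forall j, forall k, r i j && r j k ==> r i k]].

Definition is_wpp (P : dposet) : bool :=
  [&& is_porder (le1 P), is_porder (le2 P),
      [forall i, forall j, le1 P i j && le2 P i j ==> (i == j)],
      [forall i, forall j, qle P i j || qle P j i],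
      [forall i, forall j, forall k, qle P i j && qle P j k ==> qle P i k] &
      (* << (y <=_1 x or x <=_2 y) is the natural (total) order of [n] *)
      [forall i, forall j, (le1 P j i || le2 P i j) == (i <= j)%N]].

Definition dp_empty : dposet := existT dpT 0 (set0, set0).

(* product P Q on P |_| Q : Q is placed after P *)
Definition dp_mul (P Q : dposet) : dposet :=
  let n := dsize P in let m := dsize Q in
  existT dpT (n + m)
   ([set ij : 'I_(n + m) * 'I_(n + m) |
       match split ij.1, split ij.2 with
       | inl a, inl b => le1 P a b
       | inr a, inr b => le1 Q a b
       | _, _ => false end],
    [set ij : 'I_(n + m) * 'I_(n + m) |
       match split ij.1, split ij.2 with
       | inl a, inl b => le2 P a b
       | inr a, inr b => le2 Q a b
       | inl _, inr _ => true
       | inr _, inl _ => false end]).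

(* restriction P_{|O}, relabelled by the (increasing) enumeration of O *)
Definition dp_restr (P : dposet) (O : {set 'I_(dsize P)}) : dposet :=
  existT dpT #|O|
   ([set ij : 'I_#|O| * 'I_#|O| | le1 P (enum_val ij.1) (enum_val ij.2)],
    [set ij : 'I_#|O| * 'I_#|O| | le2 P (enum_val ij.1) (enum_val ij.2)]).

Definition upclosed1 (P : dposet) (O : {set 'I_(dsize P)}) : bool :=
  [forall i, forall j, (i \in O) && le1 P i j ==> (j \in O)].

Definition dp_delta {K : nzRingType} (P : dposet) : fsum K (dposet * dposet) :=
  ones K (map (fun O : {set 'I_(dsize P)} => (dp_restr (setC O), dp_restr O))
            (filter (@upclosed1 P) (enum [set: {set 'I_(dsize P)}]))).

(* WQSym: packed words are seq nat with letters forming {1,..,k}.      *)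
Definition pack (w : seq nat) : seq nat :=
  [seq (index x (sort leq (undup w))).+1 | x <- w].
Definition packed (w : seq nat) : bool := pack w == w.

Fixpoint words (n k : nat) : seq (seq nat) :=
  if n is n'.+1 then [seq a :: w | a <- iota 1 k, w <- words n' k] else [:: [::]].

Definition pwords (n : nat) : seq (seq nat) := [seq w <- words n n | packed w].

Definition wmul_list (u v : seq nat) : seq (seq nat) :=
  [seq w <- pwords (size u + size v) |
     (pack (take (size u) w) == u) && (pack (drop (size u) w) == v)].
Definition wmul {K : nzRingType} (x y : fsum K (seq nat)) : fsum K (seq nat) :=
  lin (fun uv => ones K (wmul_list uv.1 uv.2)) (tens x y).

Definition wdelta {K : nzRingType} (w : seq nat) : fsum K (seq nat * seq nat) :=
  ones K [seq ([seq x <- w | (x <= k)%N], pack [seq x <- w | (k < x)%N])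
         | k <- iota 0 (\max_(x <- w) x).+1].

(* A packed word g of length n is the surjection i |-> nth 0 g i.      *)
Definition linb (P : dposet) (g : seq nat) : bool :=
  [forall i : 'I_(dsize P), forall j : 'I_(dsize P),
     (le1 P i j ==> (nth 0 g i <= nth 0 g j)%N) &&
     ((nth 0 g i == nth 0 g j) ==> qeq P i j)].

Definition wlinb (P : dposet) (g : seq nat) : bool :=
  [forall i : 'I_(dsize P), forall j : 'I_(dsize P),
     (le1 P i j ==> (nth 0 g i <= nth 0 g j)%N) &&
     (le1 P i j && (nth 0 g i == nth 0 g j) ==> qeq P i j)].

Definition Lin (P : dposet) : seq (seq nat) := [seq g <- pwords (dsize P) | linb P g].
Definition WLin (P : dposet) : seq (seq nat) := [seq g <- pwords (dsize P) | wlinb P g].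

Definition phi {K : nzRingType} (P : dposet) : fsum K (seq nat) := ones K (Lin P).
Definition phi' {K : nzRingType} (P : dposet) : fsum K (seq nat) := ones K (WLin P).

Definition precb (g f : seq nat) : bool :=
  all (fun i => all (fun j =>
      (((nth 0 f i <= nth 0 f j) ==> (nth 0 g i <= nth 0 g j)) &&
       ((i < j) && (nth 0 f j < nth 0 f i) ==> (nth 0 g j < nth 0 g i)))%N)
    (iota 0 (size f))) (iota 0 (size f)).

Definition psi {K : nzRingType} (f : seq nat) : fsum K (seq nat) :=
  ones K [seq g <- pwords (size f) | precb g f].

(* Main.v *)
Require Import Defs.
From HB Require Import structures.
From mathcomp Require Import all_boot all_order all_algebra zify.
Set Implicit Arguments. Unset Strict Implicit. Unset Printing Implicit Defensive.
Import GRing.Theory.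
Definition srt (w : seq nat) := sort leq (undup w).

Lemma srt_sorted w : sorted ltn (srt w).
Proof. by rewrite ltn_sorted_uniq_leq sort_uniq undup_uniq sort_sorted //; exact: leq_total. Qed.

Lemma srt_uniq w : uniq (srt w).
Proof. by rewrite sort_uniq undup_uniq. Qed.

Lemma mem_srt w x : (x \in srt w) = (x \in w).
Proof. by rewrite mem_sort mem_undup. Qed.

Lemma size_srt w : size (srt w) = size (undup w).
Proof. by rewrite size_sort. Qed.

Lemma index_le s x y : sorted ltn s -> x \in s -> y \in s ->
  (index x s <= index y s) = (x <= y).
Proof.
move=> ss xs ys; have sl : sorted leq s by move: ss; rewrite ltn_sorted_uniq_leq => /andP[].
apply/idP/idP => [|h].
  exact: (sorted_leq_index leq_trans leqnn sl).
rewrite leqNgt; apply/negP => /(sorted_ltn_index ltn_trans ss y x ys xs).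
by rewrite ltnNge h.
Qed.

Lemma size_pack s : size (pack s) = size s.
Proof. by rewrite size_map. Qed.

Lemma nth_pack s i : i < size s -> nth 0 (pack s) i = (index (nth 0 s i) (srt s)).+1.
Proof. by move=> hi; rewrite /pack (nth_map 0). Qed.

Lemma pack_le s i j : i < size s -> j < size s ->
  (nth 0 (pack s) i <= nth 0 (pack s) j) = (nth 0 s i <= nth 0 s j).
Proof. by move=> hi hj; rewrite !nth_pack // ltnS index_le ?srt_sorted // mem_srt mem_nth. Qed.

Lemma pack_eq s i j : i < size s -> j < size s ->
  (nth 0 (pack s) i == nth 0 (pack s) j) = (nth 0 s i == nth 0 s j).
Proof. by move=> hi hj; rewrite !eqn_leq !pack_le. Qed.

Lemma pack_lt s i j : i < size s -> j < size s ->
  (nth 0 (pack s) i < nth 0 (pack s) j) = (nth 0 s i < nth 0 s j).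
Proof. by move=> hi hj; rewrite !ltnNge !pack_le. Qed.

Lemma index_count s x : sorted ltn s -> x \in s ->
  index x s = count (fun y => y < x) s.
Proof.
move=> ss xs; have us : uniq s by apply: (sorted_uniq ltn_trans ltnn).
have e : {in s, forall y, (y < x) = (index y s < index x s)}.
  by move=> y ys; rewrite !ltnNge index_le.
rewrite (eq_in_count e) -[X in count _ X](mkseq_nth 0 s) /mkseq count_map.
have e2 : {in iota 0 (size s), forall j,
   (preim (nth 0 s) (fun y => index y s < index x s)) j = (j < index x s)}.
  by move=> j; rewrite mem_iota /= => hj; rewrite index_uniq.
rewrite (eq_in_count e2) -size_filter.
have := filter_iota_ltn 0 (index_size x s); rewrite add0n => ->.
by rewrite size_iota.
Qed.

Lemma size_undup_map (F G : nat -> nat) J :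
  {in J &, forall a b, (F a == F b) = (G a == G b)} ->
  size (undup (map F J)) = size (undup (map G J)).
Proof.
elim: J => //= a J IH h.
have h' : {in J &, forall a b, (F a == F b) = (G a == G b)}.
  by move=> x y hx hy; apply: h; rewrite inE ?hx ?hy orbT.
have -> : (F a \in map F J) = (G a \in map G J).
  apply/mapP/mapP => -[b hb /eqP e]; exists b => //; apply/eqP.
    by rewrite -h ?inE ?hb ?eqxx ?orbT.
  by rewrite h ?inE ?hb ?eqxx ?orbT.
by case: ifP => _ /=; rewrite IH.
Qed.

Lemma pack_pattern s t : size s = size t ->
  (forall i j, i < size s -> j < size s ->
     (nth 0 s i <= nth 0 s j) = (nth 0 t i <= nth 0 t j)) -> pack s = pack t.
Proof.
move=> est h; apply: (@eq_from_nth _ 0); first by rewrite !size_pack.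
move=> i; rewrite size_pack => hi.
rewrite !nth_pack -?est //; congr S.
rewrite !index_count ?srt_sorted ?mem_srt ?mem_nth -?est //.
rewrite /srt !count_sort -!size_filter !filter_undup.
rewrite -[X in size (undup (filter _ X)) = _](mkseq_nth 0 s).
rewrite -[X in _ = size (undup (filter _ X))](mkseq_nth 0 t) /mkseq.
rewrite !filter_map -est.
have -> : filter (preim (nth 0 t) (fun y => y < nth 0 t i)) (iota 0 (size s)) =
          filter (preim (nth 0 s) (fun y => y < nth 0 s i)) (iota 0 (size s)).
  apply: eq_in_filter => j; rewrite mem_iota /= => hj.
  by rewrite !ltnNge h.
apply/esym/size_undup_map => a b; rewrite !mem_filter !mem_iota /= => /andP[_ ha] /andP[_ hb].
by rewrite !eqn_leq !h.
Qed.

Lemma pack_idem s : pack (pack s) = pack s.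
Proof.
apply: pack_pattern; first by rewrite size_pack.
by move=> i j; rewrite size_pack => hi hj; rewrite pack_le.
Qed.

Lemma packed_pack s : packed (pack s).
Proof. by rewrite /packed pack_idem. Qed.

Lemma packed_mem w : packed w -> forall x, (x \in w) = (0 < x <= size (undup w)).
Proof.
move=> /eqP hw x; rewrite -[in LHS]hw /pack; apply/mapP/idP => [[y hy ->]|/andP[x0 xm]].
  by rewrite ltnS /= -size_srt index_mem mem_srt.
have xm' : x.-1 < size (srt w) by rewrite size_srt prednK.
exists (nth 0 (srt w) x.-1); first by rewrite -mem_srt mem_nth.
by rewrite index_uniq ?srt_uniq // prednK.
Qed.

Lemma packed_max w : packed w -> \max_(x <- w) x = size (undup w).
Proof.
move=> pw; apply/eqP; rewrite eqn_leq; apply/andP; split.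
  by apply/bigmax_leqP_seq => x; rewrite packed_mem // => /andP[].
case e: (size (undup w)) => [|m] //.
have hm : m.+1 \in w.
  by rewrite (packed_mem pw) e leqnn.
exact: (@leq_bigmax_seq _ w xpredT (fun x => x) m.+1 hm).
Qed.

Lemma iota_sorted_leq a m : sorted leq (iota a m).
Proof. by have := iota_ltn_sorted a m; rewrite ltn_sorted_uniq_leq => /andP[]. Qed.

Lemma packedI w m : (forall x, (x \in w) = (0 < x <= m)) -> packed w.
Proof.
move=> hm.
have e : srt w = iota 1 m.
  rewrite /srt -[RHS](sorted_sort leq_trans (iota_sorted_leq 1 m)).
  apply/(perm_sortP leq_total leq_trans anti_leq).
  apply: uniq_perm; rewrite ?undup_uniq ?iota_uniq // => x.
  by rewrite mem_undup hm mem_iota add1n ltnS.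
apply/eqP; rewrite /pack -/(srt w) e; apply: map_id_in => x.
rewrite hm => /andP[x0 xm].
have hx : x.-1 < size (iota 1 m) by rewrite size_iota prednK.
have := index_uniq 0 hx (iota_uniq 1 m).
have hx' : x.-1 < m by rewrite prednK.
rewrite (nth_iota 0 1 hx') add1n prednK // => ->; by rewrite prednK.
Qed.

Lemma mem_words n k w :
  (w \in words n k) = (size w == n) && all (fun x => 0 < x <= k) w.
Proof.
elim: n w => [|n IH] [|a w] //=.
  apply/allpairsP => -[[b v] /= [_ _]] //.
apply/allpairsP/idP => [[[b v] /= [hb hv [-> ->]]]|/andP[/eqP[hs] /andP[ha hw]]].
  by move: hv; rewrite IH eqSS => /andP[-> ->]; rewrite andbT; move: hb; rewrite mem_iota.
exists (a, w) => /=; split => //.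
  by rewrite mem_iota.
by rewrite IH hs eqxx hw.
Qed.

Lemma words_uniq n k : uniq (words n k).
Proof.
elim: n => [|n IH] //=.
apply: allpairs_uniq => //; first exact: iota_uniq.
by move=> [a w] [b v] _ _ /= [-> ->].
Qed.

Lemma pwords_uniq n : uniq (pwords n).
Proof. by rewrite filter_uniq // words_uniq. Qed.

Lemma mem_pwords n w : (w \in pwords n) = packed w && (size w == n).
Proof.
rewrite mem_filter mem_words; case pw: (packed w) => //=.
case sw: (size w == n) => //=.
apply/allP => x; rewrite packed_mem // => /andP[-> /leq_trans]; apply.
by rewrite -(eqP sw) size_undup.
Qed.
Section FS.
Variable K : nzRingType.
Local Open Scope ring_scope.
Implicit Types (B C : eqType).

Lemma coef_nil B b : coef ([::] : fsum K B) b = 0.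
Proof. by rewrite /coef big_nil. Qed.

Lemma coef_cons B (p : K * B) (x : fsum K B) b :
  coef (p :: x) b = (if p.2 == b then p.1 else 0) + coef x b.
Proof. rewrite /coef big_cons; case: (p.2 == b) => //; by rewrite add0r. Qed.

Lemma coef_cat B (x y : fsum K B) b : coef (x ++ y) b = coef x b + coef y b.
Proof. by rewrite /coef big_cat. Qed.

Lemma coef_ones B (s : seq B) b : coef (ones K s) b = (count (pred1 b) s)%:R.
Proof.
elim: s => [|a s IH]; first by rewrite coef_nil.
rewrite /ones /= coef_cons -/(ones K s) IH /= natrD.
by case: (a == b).
Qed.

Lemma coef_lin B C (f : B -> fsum K C) x c :
  coef (lin f x) c = \sum_(p <- x) p.1 * coef (f p.2) c.
Proof.
elim: x => [|p x IH]; first by rewrite /lin /= coef_nil big_nil.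
rewrite /lin /= coef_cat -/(lin f x) IH big_cons; congr (_ + _).
by rewrite /coef big_map mulr_sumr.
Qed.

Lemma coef_tens B C (x : fsum K B) (y : fsum K C) b c :
  coef (tens x y) (b, c) = coef x b * coef y c.
Proof.
elim: x => [|p x IH]; first by rewrite /tens /= !coef_nil mul0r.
rewrite /tens /= coef_cat -/(tens x y) IH coef_cons mulrDl; congr (_ + _).
rewrite /coef big_map; case: eqP => [->|ne].
  by rewrite mulr_sumr; apply: eq_big => q //=; rewrite xpair_eqE eqxx.
rewrite mul0r big1 // => q /=; rewrite xpair_eqE => /andP[/eqP] //.
Qed.

Lemma sum_if_uniq B (U : seq B) a (v : K) : uniq U -> a \in U ->
  \sum_(b <- U) (if a == b then v else 0) = v.
Proof.
move=> uU aU; rewrite (bigD1_seq a) //= eqxx big1 ?addr0 // => b.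
by rewrite eq_sym => /negbTE ->.
Qed.

Lemma sum_regroup B (x : fsum K B) (h : B -> K) :
  \sum_(p <- x) p.1 * h p.2 = \sum_(b <- undup (map snd x)) coef x b * h b.
Proof.
have e : forall b, coef x b * h b = \sum_(p <- x) (if p.2 == b then p.1 * h p.2 else 0).
  move=> b; rewrite /coef mulr_suml big_mkcond; apply: eq_bigr => p _.
  by case: eqP => [->|]; rewrite ?mul0r.
rewrite (eq_bigr _ (fun b _ => e b)) exchange_big /=.
rewrite [LHS]big_seq [RHS]big_seq; apply: eq_bigr => p px.
by rewrite sum_if_uniq ?undup_uniq // mem_undup; apply: map_f.
Qed.

End FS.
Section WPP.
Variable P : dposet.
Hypothesis wP : is_wpp P.

Lemma wpp_nat (i j : 'I_(dsize P)) : (le1 P j i || le2 P i j) = (i <= j).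
Proof. by case/and5P: wP => _ _ _ _ /andP[_ /forallP/(_ i)/forallP/(_ j)/eqP]. Qed.

Lemma le1_refl i : le1 P i i.
Proof. by case/and5P: wP => /and3P[/forallP h _ _] *; exact: h. Qed.

Lemma le2_refl i : le2 P i i.
Proof. by case/and5P: wP => _ /and3P[/forallP h _ _] *; exact: h. Qed.

Lemma qle_refl i : qle P i i.
Proof. by rewrite /qle le1_refl. Qed.

Lemma qle_total i j : qle P i j || qle P j i.
Proof. by case/and5P: wP => _ _ _ /forallP/(_ i)/forallP/(_ j) h *. Qed.

Lemma qle_trans i j k : qle P i j -> qle P j k -> qle P i k.
Proof.
move=> h1 h2; case/and5P: wP => _ _ _ _ /andP[/forallP/(_ i)/forallP/(_ j)/forallP/(_ k) h _].
by move: h; rewrite h1 h2.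
Qed.

Lemma ord_eq_le (i j : 'I_(dsize P)) : (i <= j)%N -> (j <= i)%N -> i = j.
Proof. by move=> h1 h2; apply/val_inj/eqP; rewrite eqn_leq h1 h2. Qed.

Lemma le1E i j : le1 P i j = (j <= i)%N && qle P i j.
Proof.
apply/idP/andP => [h|[ji q]].
  by split; [rewrite -wpp_nat h | rewrite /qle h].
move: q; rewrite /qle; case/orP => // h2.
case: (eqVneq i j) => [->|nij]; first exact: le1_refl.
have := wpp_nat i j; rewrite h2 orbT => /esym ij.
by rewrite (ord_eq_le ij ji) eqxx in nij.
Qed.

Lemma le2E i j : le2 P i j = (i <= j)%N && qle P i j.
Proof.
apply/idP/andP => [h|[ij q]].
  by split; [rewrite -wpp_nat h orbT | rewrite /qle h orbT].
move: q; rewrite /qle; case/orP => // h1.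
case: (eqVneq i j) => [->|nij]; first exact: le2_refl.
have := wpp_nat j i; rewrite h1 /= => /esym ji.
by rewrite (ord_eq_le ij ji) eqxx in nij.
Qed.

End WPP.

Definition hq (P : dposet) (i : 'I_(dsize P)) := #|[set j | qle P j i]|.

Lemma hq_le P (wP : is_wpp P) i j : (hq i <= hq j) = qle P i j.
Proof.
apply/idP/idP => [|q].
  apply: contraLR => nq.
  have qji : qle P j i by case/orP: (qle_total wP i j) => // h; rewrite h in nq.
  rewrite -ltnNge; apply: proper_card; rewrite properE; apply/andP; split.
    by apply/subsetP => k; rewrite !inE => kj; exact: qle_trans kj qji.
  by apply/subsetPn; exists i; rewrite !inE ?qle_refl.
apply: subset_leq_card; apply/subsetP => k; rewrite !inE => ki; exact: qle_trans ki q.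
Qed.

Lemma nth_map_enum n (F : 'I_n -> nat) (i : 'I_n) :
  nth 0 [seq F j | j <- enum 'I_n] i = F i.
Proof. by rewrite (nth_map i) ?size_enum_ord // nth_ord_enum. Qed.

Lemma size_map_enum n (F : 'I_n -> nat) : size [seq F j | j <- enum 'I_n] = n.
Proof. by rewrite size_map size_enum_ord. Qed.

Definition fP (P : dposet) := pack [seq hq j | j <- enum 'I_(dsize P)].

Lemma fP_le P (wP : is_wpp P) (i j : 'I_(dsize P)) :
  (nth 0 (fP P) i <= nth 0 (fP P) j) = qle P i j.
Proof. by rewrite pack_le ?size_map_enum // !nth_map_enum hq_le. Qed.

Lemma size_fP P : size (fP P) = dsize P.
Proof. by rewrite size_pack size_map_enum. Qed.
Lemma lex_le n a b x y : x <= n -> y <= n ->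
  (a * n.+1 + x <= b * n.+1 + y) = (a < b) || (a == b) && (x <= y).
Proof.
move=> hx hy; case: (ltngtP a b) => [ab|ba|->] /=.
- apply/idP; nia.
- apply/negbTE; rewrite -ltnNge; nia.
- by rewrite leq_add2l.
Qed.

Lemma all_iota n (p : nat -> bool) : all p (iota 0 n) = [forall i : 'I_n, p i].
Proof.
rewrite -val_enum_ord all_map; apply/allP/forallP => h i.
  by apply: h; rewrite mem_enum.
by move=> _; apply: h.
Qed.

Lemma precbE n g f : size f = n -> precb g f =
  [forall i : 'I_n, forall j : 'I_n,
     ((nth 0 f i <= nth 0 f j) ==> (nth 0 g i <= nth 0 g j)) &&
     ((i < j) && (nth 0 f j < nth 0 f i) ==> (nth 0 g j < nth 0 g i))].
Proof.
move=> <-; rewrite /precb all_iota; apply: eq_forallb => i /=.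
by rewrite all_iota.
Qed.

Lemma mem_Lin P f : (f \in Lin P) = linb P f && (packed f && (size f == dsize P)).
Proof. by rewrite mem_filter mem_pwords. Qed.

Lemma mem_WLin P f : (f \in WLin P) = wlinb P f && (packed f && (size f == dsize P)).
Proof. by rewrite mem_filter mem_pwords. Qed.

Lemma Lin_uniq P : uniq (Lin P).
Proof. by rewrite filter_uniq // pwords_uniq. Qed.

Lemma WLin_uniq P : uniq (WLin P).
Proof. by rewrite filter_uniq // pwords_uniq. Qed.

Lemma ord_neq_lt n (i j : 'I_n) : i != j -> (j <= i)%N -> (j < i)%N.
Proof. by move=> nij ji; rewrite ltn_neqAle ji andbT; apply: contraNneq nij => e; apply/eqP/val_inj. Qed.

Section PsiPhi.
Variable P : dposet.
Hypothesis wP : is_wpp P.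
Local Notation n := (dsize P).

Lemma prec_wlin g f : size f = n -> linb P f -> precb g f -> wlinb P g.
Proof.
move=> sf /forallP lf; rewrite (precbE _ sf) => /forallP pr.
apply/forallP => i; apply/forallP => j.
have /forallP/(_ j)/andP[/implyP l1 /implyP l2] := lf i.
have /forallP/(_ j)/andP[/implyP p1 _] := pr i.
have /forallP/(_ i)/andP[_ /implyP p2] := pr j.
apply/andP; split; first by apply/implyP => l; exact: p1 (l1 l).
apply/implyP => /andP[l /eqP ge].
case: (eqVneq (nth 0 f i) (nth 0 f j)) => [e|ne]; first by apply: l2; rewrite e.
have fij : nth 0 f i < nth 0 f j by rewrite ltn_neqAle ne l1.
case: (eqVneq i j) => [->|nij]; first by rewrite /qeq qle_refl.
have ji : (j < i)%N by apply: ord_neq_lt nij _; move: l; rewrite le1E // => /andP[].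
by move: (p2 (introT andP (conj ji fij))); rewrite ge ltnn.
Qed.

Definition key g (i : 'I_n) := nth 0 g i * n.+1 + hq i.
Definition f0 g := pack [seq key g j | j <- enum 'I_n].

Lemma hq_leqn (i : 'I_n) : hq i <= n.
Proof. by rewrite /hq; apply: leq_trans (max_card _) _; rewrite card_ord. Qed.

Lemma key_le g i j : (key g i <= key g j) =
  (nth 0 g i < nth 0 g j) || (nth 0 g i == nth 0 g j) && qle P i j.
Proof. by rewrite /key lex_le ?hq_leqn // hq_le. Qed.

Lemma f0_le g (i j : 'I_n) : (nth 0 (f0 g) i <= nth 0 (f0 g) j) = (key g i <= key g j).
Proof. by rewrite pack_le ?size_map_enum // !nth_map_enum. Qed.

Lemma size_f0 g : size (f0 g) = n.
Proof. by rewrite size_pack size_map_enum. Qed.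

Lemma f0_eq g (i j : 'I_n) : (nth 0 (f0 g) i == nth 0 (f0 g) j) =
  (nth 0 g i == nth 0 g j) && qeq P i j.
Proof.
rewrite eqn_leq !f0_le !key_le /qeq.
by case: (ltngtP (nth 0 g i) (nth 0 g j)) => [h|h|e] //=.
Qed.

Lemma f0_Lin g : wlinb P g -> f0 g \in Lin P.
Proof.
move=> /forallP wl; rewrite mem_Lin packed_pack size_f0 eqxx /= andbT.
apply/forallP => i; apply/forallP => j.
have /forallP/(_ j)/andP[/implyP w1 _] := wl i.
apply/andP; split; apply/implyP => h.
- rewrite f0_le key_le; move: (w1 h); rewrite leq_eqVlt => /orP[->|->] //=.
  by rewrite /qle h orbT.
- by move: h; rewrite f0_eq => /andP[].
Qed.

Lemma f0_prec g : size g = n -> wlinb P g -> precb g (f0 g).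
Proof.
move=> sg /forallP wl; rewrite (precbE _ (size_f0 g)).
apply/forallP => i; apply/forallP => j; apply/andP; split.
  by apply/implyP; rewrite f0_le key_le => /orP[/ltnW|/andP[/eqP-> _]].
apply/implyP => /andP[ij]; rewrite ltnNge f0_le key_le => H.
case: (ltngtP (nth 0 g j) (nth 0 g i)) => // [lt|e].
  by move: H; rewrite lt.
have nq : ~~ qle P i j by move: H; rewrite e eqxx ltnn.
have qji : qle P j i by case/orP: (qle_total wP i j) => // h; rewrite h in nq.
have l : le1 P j i by rewrite le1E // (ltnW ij).
have /forallP/(_ i)/andP[_ /implyP w2] := wl j.
by move: (w2 (introT andP (conj l (introT eqP e)))); rewrite /qeq => /andP[_]; rewrite (negbTE nq).
Qed.

Lemma prec_unique g f : packed f -> size f = n -> linb P f -> precb g f ->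
  wlinb P g -> f = f0 g.
Proof.
move=> pf sf /forallP lf; rewrite (precbE _ sf) => /forallP pr wl.
rewrite -(eqP pf) /f0; apply: pack_pattern; first by rewrite sf size_map_enum.
move=> a b; rewrite sf => ha hb.
pose i := Ordinal ha; pose j := Ordinal hb.
rewrite -[a]/(nat_of_ord i) -[b]/(nat_of_ord j) !nth_map_enum key_le.
have /forallP/(_ j)/andP[/implyP l1 /implyP l2] := lf i.
have /forallP/(_ i)/andP[/implyP l1' _] := lf j.
have /forallP/(_ j)/andP[/implyP p1 /implyP p2] := pr i.
have /forallP/(_ i)/andP[/implyP p1' /implyP p2'] := pr j.
apply/idP/idP => [fij|].
  have gij := p1 fij.
  move: gij; rewrite leq_eqVlt => /orP[/eqP ge|->] //; rewrite ge eqxx ltnn /=.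
  apply: contraT => nq.
  have qji : qle P j i by case/orP: (qle_total wP i j) => // h; rewrite h in nq.
  case: (ltngtP i j) => [ij|ji|e].
  - have l : le1 P j i by rewrite le1E // (ltnW ij).
    have e : nth 0 f i == nth 0 f j by rewrite eqn_leq fij l1'.
    by move: (l2 e); rewrite /qeq (negbTE nq).
  - case: (ltngtP (nth 0 f i) (nth 0 f j)) fij => // [lt|e] _.
      by move: (p2' (introT andP (conj ji lt))); rewrite ge ltnn.
    by move: (l2 (introT eqP e)); rewrite /qeq (negbTE nq).
  - have ij : i = j by apply: val_inj.
    by rewrite ij qle_refl in nq.
move=> h; rewrite leqNgt; apply/negP => fji.
have gji := p1' (ltnW fji).
have [ge q] : nth 0 g i = nth 0 g j /\ qle P i j.
  case/orP: h => [lt|/andP[/eqP-> ->]] //.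
  by move: gji; rewrite leqNgt lt.
case: (ltngtP i j) => [ij|ji|e].
- by move: (p2 (introT andP (conj ij fji))); rewrite ge ltnn.
- have l : le1 P i j by rewrite le1E // (ltnW ji).
  by move: (l1 l); rewrite leqNgt fji.
- have ij : i = j by apply: val_inj.
  by rewrite ij ltnn in fji.
Qed.

Lemma count_prec g : packed g -> size g = n -> count (precb g) (Lin P) = wlinb P g.
Proof.
move=> pg sg; case wl: (wlinb P g).
  rewrite (@eq_in_count _ _ (pred1 (f0 g))) ?count_uniq_mem ?Lin_uniq ?f0_Lin //.
  move=> f; rewrite mem_Lin => /andP[lf /andP[pf /eqP sf]] /=.
  apply/idP/eqP => [pr|->]; first exact: prec_unique.
  exact: f0_prec.
apply/eqP; rewrite eqn0Ngt -has_count; apply/hasPn => f.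
rewrite mem_Lin => /andP[lf /andP[_ /eqP sf]]; apply/negP => pr.
by rewrite (prec_wlin sf lf pr) in wl.
Qed.

End PsiPhi.
Definition muw n (g : seq nat) :=
  #|[set ij : 'I_n * 'I_n | (ij.2 < ij.1)%N && (nth 0 g ij.1 <= nth 0 g ij.2)]| +
  #|[set ij : 'I_n * 'I_n | (ij.2 < ij.1)%N && (nth 0 g ij.1 < nth 0 g ij.2)]|.
Definition muP P :=
  #|[set ij : 'I_(dsize P) * 'I_(dsize P) | (ij.2 < ij.1)%N && qle P ij.1 ij.2]| +
  #|[set ij : 'I_(dsize P) * 'I_(dsize P) |
       (ij.2 < ij.1)%N && (qle P ij.1 ij.2 && ~~ qle P ij.2 ij.1)]|.

Lemma mu_main Q (wQ : is_wpp Q) g : wlinb Q g -> muP Q <= muw (dsize Q) g /\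
  (muP Q = muw (dsize Q) g ->
     forall a b : 'I_(dsize Q), (nth 0 g a <= nth 0 g b) = qle Q a b).
Proof.
move=> /forallP wl.
pose A1 := [set ij : 'I_(dsize Q) * 'I_(dsize Q) | (ij.2 < ij.1)%N && qle Q ij.1 ij.2].
pose B1 := [set ij : 'I_(dsize Q) * 'I_(dsize Q) | (ij.2 < ij.1)%N && (nth 0 g ij.1 <= nth 0 g ij.2)].
pose A2 := [set ij : 'I_(dsize Q) * 'I_(dsize Q) |
       (ij.2 < ij.1)%N && (qle Q ij.1 ij.2 && ~~ qle Q ij.2 ij.1)].
pose B2 := [set ij : 'I_(dsize Q) * 'I_(dsize Q) | (ij.2 < ij.1)%N && (nth 0 g ij.1 < nth 0 g ij.2)].
have s1 : A1 \subset B1.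
  apply/subsetP => -[a b]; rewrite !inE /= => /andP[ba q]; rewrite ba /=.
  have l : le1 Q a b by rewrite le1E // (ltnW ba).
  by have /forallP/(_ b)/andP[/implyP w1 _] := wl a; exact: w1 l.
have s2 : A2 \subset B2.
  apply/subsetP => -[a b]; rewrite !inE /= => /andP[ba /andP[q nq]]; rewrite ba /=.
  have l : le1 Q a b by rewrite le1E // (ltnW ba).
  have /forallP/(_ b)/andP[/implyP w1 /implyP w2] := wl a.
  rewrite ltn_neqAle w1 // andbT; apply/negP => e.
  by move: (w2 (introT andP (conj l e))); rewrite /qeq (negbTE nq) andbF.
have c1 := subset_leq_card s1; have c2 := subset_leq_card s2.
have -> : muP Q = #|A1| + #|A2| by [].
have -> : muw (dsize Q) g = #|B1| + #|B2| by [].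
split; first by rewrite leq_add.
move=> e.
have e1 : #|B1| <= #|A1| by lia.
have e2 : #|B2| <= #|A2| by lia.
have /eqP/setP E1 : A1 == B1 by rewrite eqEcard s1 e1.
have /eqP/setP E2 : A2 == B2 by rewrite eqEcard s2 e2.
have F1 : forall a b : 'I_(dsize Q), (b < a)%N -> (nth 0 g a <= nth 0 g b) = qle Q a b.
  by move=> a b ba; move: (E1 (a, b)); rewrite !inE /= ba.
have F2 : forall a b : 'I_(dsize Q), (b < a)%N ->
   (nth 0 g a < nth 0 g b) = qle Q a b && ~~ qle Q b a.
  by move=> a b ba; move: (E2 (a, b)); rewrite !inE /= ba.
move=> a b; case: (ltngtP a b) => [ab|ba|ab].
- rewrite leqNgt F2 // negb_and negbK.
  case q: (qle Q a b); rewrite ?orbT //= .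
  by have := qle_total wQ a b; rewrite q /= => ->.
- exact: F1.
- have -> : a = b by apply: val_inj.
  by rewrite leqnn qle_refl.
Qed.

Definition Pw (w : seq nat) : dposet :=
  existT dpT (size w)
   ([set ij : 'I_(size w) * 'I_(size w) | (ij.2 <= ij.1)%N && (nth 0 w ij.1 <= nth 0 w ij.2)],
    [set ij : 'I_(size w) * 'I_(size w) | (ij.1 <= ij.2)%N && (nth 0 w ij.1 <= nth 0 w ij.2)]).

Lemma le1Pw w (i j : 'I_(size w)) : le1 (Pw w) i j = (j <= i)%N && (nth 0 w i <= nth 0 w j).
Proof. by rewrite /le1 inE. Qed.

Lemma le2Pw w (i j : 'I_(size w)) : le2 (Pw w) i j = (i <= j)%N && (nth 0 w i <= nth 0 w j).
Proof. by rewrite /le2 inE. Qed.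

Lemma qlePw w (i j : 'I_(size w)) : qle (Pw w) i j = (nth 0 w i <= nth 0 w j).
Proof. by rewrite /qle le1Pw le2Pw -andb_orl orbC leq_total. Qed.

Lemma ordP_eq n (i j : 'I_n) : (i <= j)%N -> (j <= i)%N -> i == j.
Proof. by move=> h1 h2; rewrite -val_eqE /= eqn_leq h1 h2. Qed.

Lemma Pw_wpp w : is_wpp (Pw w).
Proof.
apply/and5P; split.
- apply/and3P; split; apply/forallP => i; rewrite ?le1Pw ?leqnn //;
    apply/forallP => j; rewrite ?le1Pw.
    by apply/implyP => /andP[/andP[h1 _] /andP[h2 _]]; rewrite ordP_eq.
  apply/forallP => k; rewrite !le1Pw; apply/implyP => /andP[/andP[h1 h2] /andP[h3 h4]].
  by rewrite (leq_trans h3 h1) (leq_trans h2 h4).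
- apply/and3P; split; apply/forallP => i; rewrite ?le2Pw ?leqnn //;
    apply/forallP => j; rewrite ?le2Pw.
    by apply/implyP => /andP[/andP[h1 _] /andP[h2 _]]; rewrite ordP_eq.
  apply/forallP => k; rewrite !le2Pw; apply/implyP => /andP[/andP[h1 h2] /andP[h3 h4]].
  by rewrite (leq_trans h1 h3) (leq_trans h2 h4).
- apply/forallP => i; apply/forallP => j; rewrite le1Pw le2Pw.
  by apply/implyP => /andP[/andP[h1 _] /andP[h2 _]]; rewrite ordP_eq.
- by apply/forallP => i; apply/forallP => j; rewrite !qlePw leq_total.
apply/andP; split.
  apply/forallP => i; apply/forallP => j; apply/forallP => k; rewrite !qlePw.
  by apply/implyP => /andP[h1 h2]; rewrite (leq_trans h1 h2).
apply/forallP => i; apply/forallP => j; rewrite le1Pw le2Pw -andb_orr orbC leq_total.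
by rewrite andbT.
Qed.

Lemma Pw_wlin w : wlinb (Pw w) w.
Proof.
apply/forallP => i; apply/forallP => j; rewrite le1Pw /qeq !qlePw.
apply/andP; split; apply/implyP; first by case/andP.
by case/andP => _ /eqP ->; rewrite leqnn.
Qed.

Lemma muPw w : muP (Pw w) = muw (size w) w.
Proof.
rewrite /muP /muw; congr (_ + _); apply: eq_card => -[a b]; rewrite !inE /= !qlePw //.
by case: (ltngtP (nth 0 w a) (nth 0 w b)) => h; rewrite ?andbT ?andbF.
Qed.

Lemma Pw_minimal w g : packed w -> g \in WLin (Pw w) -> g != w ->
  muw (size w) w < muw (size w) g.
Proof.
move=> pw; rewrite mem_WLin => /andP[wl /andP[pg /eqP sg]] ngw.
have [le eqc] := mu_main (Pw_wpp w) wl.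
rewrite -muPw ltn_neqAle le andbT; apply: contra ngw => /eqP e.
have pat := eqc e.
apply/eqP; rewrite -(eqP pg) -(eqP pw); apply: pack_pattern; first by rewrite sg.
move=> a b; rewrite sg => ha hb.
by have := pat (Ordinal ha) (Ordinal hb); rewrite qlePw.
Qed.

Lemma muP_fP P (wP : is_wpp P) : muP P = muw (dsize P) (fP P).
Proof.
rewrite /muP /muw; congr (_ + _); apply: eq_card => -[a b]; rewrite !inE /= ?fP_le //.
rewrite [X in _ = _ && X]ltnNge fP_le //; congr (_ && _).
case q: (qle P b a); rewrite ?andbF //= andbT.
by have := qle_total wP a b; rewrite q orbF.
Qed.

Lemma fP_WLin P (wP : is_wpp P) : fP P \in WLin P.
Proof.
rewrite mem_WLin packed_pack size_fP eqxx /= andbT.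
apply/forallP => i; apply/forallP => j; apply/andP; split; apply/implyP.
  by move=> l; rewrite fP_le // /qle l.
by case/andP => _; rewrite eqn_leq !fP_le.
Qed.

Lemma fP_minimal P Q (wP : is_wpp P) (wQ : is_wpp Q) :
  fP P \in WLin Q -> Q = P \/ muP Q < muP P.
Proof.
case: P wP => n [A1 A2] wP; case: Q wQ => m [B1 B2] wQ.
rewrite mem_WLin size_fP => /andP[wl /andP[_ /eqP /= nm]].
subst m.
have [le eqc] := mu_main wQ wl.
rewrite (muP_fP wP); case: (ltngtP (muP (existT dpT n (B1, B2))) (muw n (fP (existT dpT n (A1, A2))))) le => // [lt|e] _; [by right|left].
have pat := eqc e.
have qe : forall a b : 'I_n, qle (existT dpT n (B1, B2)) a b = qle (existT dpT n (A1, A2)) a b.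
  by move=> a b; rewrite -pat fP_le.
congr existT; congr pair; apply/setP => -[a b].
  by have := le1E wQ a b; have := le1E wP a b; rewrite qe /le1 /= => -> ->.
by have := le2E wQ a b; have := le2E wP a b; rewrite qe /le2 /= => -> ->.
Qed.
Definition rw n (A : {set 'I_n}) (w : seq nat) := [seq nth 0 w i | i : 'I_n <- enum A].

Lemma size_rw n (A : {set 'I_n}) w : size (rw A w) = #|A|.
Proof. by rewrite size_map cardE. Qed.

Lemma nth_rw n (A : {set 'I_n}) w (a : 'I_#|A|) : nth 0 (rw A w) a = nth 0 w (enum_val a).
Proof. by rewrite /rw (nth_map (enum_val a)) -?cardE // -enum_val_nth. Qed.

Lemma index_enum_lt n (A : {set 'I_n}) i : i \in A -> index i (enum A) < #|A|.
Proof. by move=> iA; rewrite cardE index_mem mem_enum. Qed.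

Lemma nth_rw_index n (A : {set 'I_n}) w i : i \in A ->
  nth 0 (rw A w) (index i (enum A)) = nth 0 w i.
Proof.
by move=> iA; rewrite /rw (nth_map i) ?index_mem ?mem_enum // nth_index ?mem_enum.
Qed.

Lemma mem_rw n (A : {set 'I_n}) w x : (x \in rw A w) = [exists i in A, x == nth 0 w i].
Proof.
apply/mapP/existsP => [[i iA ->]|[i /andP[iA /eqP ->]]].
  by exists i; rewrite -mem_enum iA eqxx.
by exists i; rewrite ?mem_enum.
Qed.

Lemma mem_w_split n (A : {set 'I_n}) w x : size w = n ->
  (x \in w) = (x \in rw A w) || (x \in rw (~: A) w).
Proof.
move=> sw; rewrite !mem_rw; apply/idP/idP.
  case/(nthP 0) => k hk <-.
  have hk' : k < n by rewrite -sw.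
  case: (boolP (Ordinal hk' \in A)) => iA.
    by apply/orP; left; apply/existsP; exists (Ordinal hk'); rewrite iA eqxx.
  by apply/orP; right; apply/existsP; exists (Ordinal hk'); rewrite inE iA eqxx.
by case/orP => /existsP[i /andP[_ /eqP ->]]; apply: mem_nth; rewrite sw ltn_ord.
Qed.

Lemma map_enum_nth n w : size w = n -> [seq nth 0 w i | i : 'I_n <- enum 'I_n] = w.
Proof.
move=> sw; rewrite (map_comp (nth 0 w) val) val_enum_ord -sw map_nth_iota0 //.
by rewrite take_size.
Qed.

Lemma filter_rw n w (p : pred nat) : size w = n ->
  filter p w = rw [set i : 'I_n | p (nth 0 w i)] w.
Proof.
move=> sw; rewrite -{1}(map_enum_nth sw) filter_map /rw; congr map.
rewrite {2}/enum_mem -enumT; apply: eq_filter => i /=.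
by rewrite inE.
Qed.

Definition condw P (w : seq nat) (i j : 'I_(dsize P)) :=
  (le1 P i j ==> (nth 0 w i <= nth 0 w j)) &&
  (le1 P i j && (nth 0 w i == nth 0 w j) ==> qeq P i j).
Arguments condw : clear implicits.

Lemma le1_restr P (A : {set 'I_(dsize P)}) (a b : 'I_#|A|) :
  le1 (dp_restr A) a b = le1 P (enum_val a) (enum_val b).
Proof. by rewrite /le1 inE. Qed.

Lemma le2_restr P (A : {set 'I_(dsize P)}) (a b : 'I_#|A|) :
  le2 (dp_restr A) a b = le2 P (enum_val a) (enum_val b).
Proof. by rewrite /le2 inE. Qed.

Lemma qeq_restr P (A : {set 'I_(dsize P)}) (a b : 'I_#|A|) :
  qeq (dp_restr A) a b = qeq P (enum_val a) (enum_val b).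
Proof. by rewrite /qeq /qle !le1_restr !le2_restr. Qed.

Lemma wlinb_restr P (A : {set 'I_(dsize P)}) w :
  wlinb (dp_restr A) (rw A w) = [forall i in A, forall j in A, condw P w i j].
Proof.
apply/forallP/forall_inP => [h i iA|h a].
  apply/forall_inP => j jA.
  have := h (enum_rank_in iA i) => /forallP/(_ (enum_rank_in iA j)).
  by rewrite /condw !le1_restr !nth_rw qeq_restr !enum_rankK_in.
apply/forallP => b.
have := h (enum_val a) (enum_valP a) => /forall_inP/(_ (enum_val b) (enum_valP b)).
by rewrite /condw !le1_restr !nth_rw qeq_restr.
Qed.

Lemma wlinb_pack Q x : size x = dsize Q -> wlinb Q (pack x) = wlinb Q x.
Proof.
move=> sx; apply: eq_forallb => i; apply: eq_forallb => j.
have hi : i < size x by rewrite sx ltn_ord.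
have hj : j < size x by rewrite sx ltn_ord.
by rewrite pack_le ?pack_eq.
Qed.

Lemma map_nth_index (T : eqType) (e : seq T) (v : seq nat) : uniq e -> size e = size v ->
  [seq nth 0 v (index i e) | i <- e] = v.
Proof.
move=> ue se; apply: (@eq_from_nth _ 0); first by rewrite size_map.
move=> k; rewrite size_map => hk.
have x0 : T by case: e hk {ue se} => [|x].
by rewrite (nth_map x0) // index_uniq.
Qed.

Lemma pack_addK v K0 : pack [seq x + K0 | x <- v] = pack v.
Proof.
apply: pack_pattern; first by rewrite size_map.
by move=> i j; rewrite size_map => hi hj; rewrite !(nth_map 0) // leq_add2r.
Qed.

Lemma mem_addK v K0 x : (x \in [seq y + K0 | y <- v]) = (K0 <= x) && (x - K0 \in v).
Proof.
apply/mapP/andP => [[y yv ->]|[h1 h2]].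
  by rewrite addnK yv leq_addl.
by exists (x - K0) => //; rewrite subnK.
Qed.
Section Comult.
Variables (P : dposet) (u v : seq nat) (K0 : nat).
Local Notation n := (dsize P).

Definition PR (w : seq nat) := [&& K0 <= \max_(x <- w) x,
   [seq x <- w | (x <= K0)%N] == u & pack [seq x <- w | (K0 < x)%N] == v].
Definition PL (O : {set 'I_n}) :=
  (u \in WLin (dp_restr (~: O))) && (v \in WLin (dp_restr O)).
Definition Psi (w : seq nat) : {set 'I_n} := [set i : 'I_n | K0 < nth 0 w i].

Lemma compl_Psi w : ~: Psi w = [set i : 'I_n | nth 0 w i <= K0].
Proof. by apply/setP => i; rewrite !inE -leqNgt. Qed.

Lemma PR_PL w : w \in WLin P -> PR w -> upclosed1 (Psi w) && PL (Psi w).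
Proof.
rewrite mem_WLin => /andP[wl /andP[pw /eqP sw]] /and3P[hK /eqP hu /eqP hv].
apply/andP; split.
  apply/forallP => i; apply/forallP => j; apply/implyP => /andP[]; rewrite !inE => hi l.
  have /forallP/(_ j)/andP[/implyP w1 _] := (forallP wl) i.
  exact: leq_trans hi (w1 l).
have eu : rw (~: Psi w) w = u by rewrite compl_Psi -hu (filter_rw _ sw).
have ev : pack (rw (Psi w) w) = v by rewrite -hv (filter_rw _ sw).
have wr : forall A : {set 'I_n}, wlinb (dp_restr A) (rw A w).
  move=> A; rewrite wlinb_restr; apply/forall_inP => i _; apply/forall_inP => j _.
  exact: (forallP (forallP wl i) j).
rewrite /PL !mem_WLin; apply/andP; split.
  rewrite -eu wr size_rw eqxx andbT /=.
  apply: (@packedI _ K0) => x; rewrite eu -hu mem_filter (packed_mem pw) -(packed_max pw).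
  by apply/andP/andP => [[h1 /andP[h2 h3]]|[h1 h2]]; split => //; rewrite h1 (leq_trans h2 hK).
by rewrite -ev wlinb_pack ?size_rw // wr packed_pack size_pack size_rw eqxx.
Qed.

Hypothesis eK : \max_(x <- u) x = K0.

Lemma PL_PR (O : {set 'I_n}) : upclosed1 O -> PL O ->
  exists2 w, (w \in WLin P) && PR w & Psi w = O.
Proof.
move=> up /andP[]; rewrite !mem_WLin => /andP[wu /andP[pu /eqP su]] /andP[wv /andP[pv /eqP sv]].
rewrite /= in su sv.
have umem : forall x, (x \in u) = (0 < x <= K0).
  by move=> x; rewrite (packed_mem pu) -(packed_max pu) eK.
have vmem : forall x, (x \in v) = (0 < x <= \max_(y <- v) y).
  by move=> x; rewrite (packed_mem pv) -(packed_max pv).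
pose w := [seq (if i \in O then nth 0 v (index i (enum O)) + K0
                else nth 0 u (index i (enum (~: O)))) | i <- enum 'I_n].
have sw : size w = n by rewrite size_map_enum.
have nw : forall i : 'I_n, nth 0 w i = if i \in O then nth 0 v (index i (enum O)) + K0
                else nth 0 u (index i (enum (~: O))) by move=> i; rewrite nth_map_enum.
have seO : size (enum O) = size v by rewrite -cardE sv.
have seC : size (enum (~: O)) = size u by rewrite -cardE su.
have rwO : rw O w = [seq x + K0 | x <- v].
  rewrite -[in RHS](map_nth_index (enum_uniq O) seO).
  rewrite -map_comp /rw; apply/eq_in_map => i; rewrite mem_enum => iO /=.
  by rewrite nw iO.
have rwC : rw (~: O) w = u.
  rewrite -[in RHS](map_nth_index (enum_uniq (~: O)) seC).
  rewrite /rw; apply/eq_in_map => i; rewrite mem_enum => iO /=.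
  by rewrite nw; move: iO; rewrite inE => /negbTE ->.
have hin : forall i : 'I_n, (i \in O) = (K0 < nth 0 w i).
  move=> i; rewrite nw; case: ifP => iO.
    have : nth 0 v (index i (enum O)) \in v by rewrite mem_nth // sv index_enum_lt.
    by rewrite vmem => /andP[h _]; rewrite -{1}(add0n K0) ltn_add2r h.
  have : nth 0 u (index i (enum (~: O))) \in u.
    by rewrite mem_nth // su index_enum_lt // inE iO.
  by rewrite umem => /andP[_ h]; rewrite ltnNge h.
have hPsi : Psi w = O by apply/setP => i; rewrite inE hin.
have wmem : forall x, (x \in w) = (0 < x <= K0 + \max_(y <- v) y).
  move=> x; rewrite (mem_w_split O x sw) rwO rwC umem mem_addK vmem.
  apply/idP/idP.
    by case/orP => [/and3P[h1 h2 h3]|/andP[h1 h2]]; apply/andP; split; lia.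
  case/andP => h1 h2; case: (leqP x K0) => h; apply/orP.
    by right; apply/andP; split.
  by left; apply/and3P; split; lia.
have pw : packed w := packedI wmem.
have hK : K0 <= \max_(x <- w) x.
  case e: K0 => [|k] //.
  have hk : k.+1 \in w by rewrite wmem -e leq_addr andbT e.
  exact: (@leq_bigmax_seq _ w xpredT (fun x => x) k.+1 hk).
exists w => //.
apply/andP; split.
  rewrite mem_WLin pw sw eqxx /= andbT.
  apply/forallP => i; apply/forallP => j; rewrite -/(condw P w i j).
  case: (boolP (i \in O)) => iO; case: (boolP (j \in O)) => jO.
  - have : wlinb (dp_restr O) (rw O w).
      by rewrite -wlinb_pack ?size_rw // rwO pack_addK (eqP pv).
    by rewrite wlinb_restr => /forall_inP/(_ i iO)/forall_inP/(_ j jO).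
  - rewrite /condw; case l: (le1 P i j) => //=.
    by have := (forallP (forallP up i) j); rewrite iO l (negbTE jO).
  - rewrite /condw; move: iO jO; rewrite !hin -leqNgt => hi hj.
    rewrite (leq_trans hi (ltnW hj)) implybT /=.
    have : nth 0 w i != nth 0 w j by rewrite neq_ltn (leq_ltn_trans hi hj).
    by move/negbTE->; rewrite andbF.
  - have : wlinb (dp_restr (~: O)) (rw (~: O) w) by rewrite rwC.
    have iC : i \in ~: O by rewrite inE.
    have jC : j \in ~: O by rewrite inE.
    by rewrite wlinb_restr => /forall_inP/(_ i iC)/forall_inP/(_ j jC).
rewrite /PR hK /=; apply/andP; split.
  rewrite (filter_rw _ sw) -rwC; apply/eqP; congr rw.
  by apply/setP => i; rewrite !inE hin -leqNgt.
rewrite (filter_rw _ sw).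
have -> : [set i : 'I_n | K0 < nth 0 w i] = O by rewrite -hPsi.
by rewrite rwO pack_addK.
Qed.

Lemma Psi_inj w1 w2 : w1 \in WLin P -> PR w1 -> w2 \in WLin P -> PR w2 ->
  Psi w1 = Psi w2 -> w1 = w2.
Proof.
rewrite !mem_WLin => /andP[_ /andP[p1 /eqP s1]] /and3P[_ /eqP u1 /eqP v1].
move=> /andP[_ /andP[p2 /eqP s2]] /and3P[_ /eqP u2 /eqP v2] e.
set O := Psi w1.
have hin1 : forall i, (i \in O) = (K0 < nth 0 w1 i) by move=> i; rewrite inE.
have hin2 : forall i, (i \in O) = (K0 < nth 0 w2 i) by move=> i; rewrite /O e inE.
have c1 : rw (~: O) w1 = u by rewrite compl_Psi -u1 (filter_rw _ s1).
have c2 : rw (~: O) w2 = u by rewrite /O e compl_Psi -u2 (filter_rw _ s2).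
have o1 : pack (rw O w1) = v by rewrite -v1 (filter_rw _ s1).
have o2 : pack (rw O w2) = v by rewrite /O e -v2 (filter_rw _ s2).
rewrite -(eqP p1) -(eqP p2); apply: pack_pattern; first by rewrite s1 s2.
move=> a b; rewrite s1 => ha hb; pose i := Ordinal ha; pose j := Ordinal hb.
rewrite -[a]/(nat_of_ord i) -[b]/(nat_of_ord j).
have nC : forall k, k \notin O -> nth 0 w1 k = nth 0 w2 k.
  move=> k kO; have kC : k \in ~: O by rewrite inE.
  by rewrite -(nth_rw_index w1 kC) -(nth_rw_index w2 kC) c1 c2.
case: (boolP (i \in O)) => iO; case: (boolP (j \in O)) => jO.
- rewrite -(nth_rw_index w1 iO) -(nth_rw_index w1 jO) -(nth_rw_index w2 iO).
  rewrite -(nth_rw_index w2 jO).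
  rewrite -(@pack_le (rw O w1)) ?size_rw ?index_enum_lt //.
  by rewrite -(@pack_le (rw O w2)) ?size_rw ?index_enum_lt // o1 o2.
- move: (iO) (jO); rewrite !hin1 -leqNgt => h1 h2; move: iO jO; rewrite !hin2 -leqNgt => h3 h4.
  by rewrite leqNgt (leq_ltn_trans h2 h1) leqNgt (leq_ltn_trans h4 h3).
- move: (iO) (jO); rewrite !hin1 -leqNgt => h1 h2; move: iO jO; rewrite !hin2 -leqNgt => h3 h4.
  by rewrite (leq_trans h1 (ltnW h2)) (leq_trans h3 (ltnW h4)).
- by rewrite !nC.
Qed.

Lemma comult_count :
  count PL (filter (@upclosed1 P) (enum [set: {set 'I_n}])) = count PR (WLin P).
Proof.
rewrite -!size_filter.
have U1 : uniq (filter PL (filter (@upclosed1 P) (enum [set: {set 'I_n}]))).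
  by apply: filter_uniq; apply: filter_uniq; apply: enum_uniq.
have U2 : uniq (map Psi (filter PR (WLin P))).
  rewrite map_inj_in_uniq; first by apply: filter_uniq; exact: WLin_uniq.
  move=> w1 w2.
  rewrite mem_filter => /andP[r1 m1]; rewrite mem_filter => /andP[r2 m2] e.
  exact: (Psi_inj m1 r1 m2 r2 e).
rewrite -(size_map Psi); apply: perm_size; apply: uniq_perm => // O.
rewrite mem_filter mem_filter mem_enum in_setT andbT; apply/andP/mapP => [[pl up]|[w]].
  by have [w /andP[wW pr] <-] := PL_PR up pl; exists w; rewrite // mem_filter pr wW.
by rewrite mem_filter => /andP[pr wW] ->; have /andP[-> ->] := PR_PL wW pr.
Qed.

End Comult.
Section Final.
Variable K : nzRingType.
Local Open Scope ring_scope.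

Lemma coef_phi' P w : coef (phi' (K := K) P) w = (w \in WLin P)%:R.
Proof. by rewrite /phi' coef_ones count_uniq_mem ?WLin_uniq. Qed.

Lemma coef_phi P w : coef (phi (K := K) P) w = (w \in Lin P)%:R.
Proof. by rewrite /phi coef_ones count_uniq_mem ?Lin_uniq. Qed.

Lemma sum_bool (T : Type) (s : seq T) (b : pred T) :
  \sum_(x <- s) ((b x)%:R : K) = (count b s)%:R.
Proof. by elim: s => [|a s IH]; rewrite ?big_nil ?big_cons //= IH natrD. Qed.

Lemma sum_ones (B : Type) (s : seq B) (G : K * B -> K) :
  \sum_(p <- ones K s) G p = \sum_(b <- s) G (1, b).
Proof. by rewrite /ones big_map. Qed.

Lemma sum_if_uniq' (B : eqType) (U : seq B) a (v : K) : uniq U ->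
  \sum_(b <- U) (if a == b then v else 0) = if a \in U then v else 0.
Proof.
move=> uU; case: ifP => aU; first exact: sum_if_uniq.
by rewrite big_seq big1 // => b bU; case: eqP => // e; rewrite e bU in aU.
Qed.

Lemma WLin_size0 (P : dposet) : dsize P = 0%N -> WLin P = [:: [::]].
Proof.
case: P => n [A B] /= e; subst n.
rewrite /WLin /pwords /=.
by have -> : wlinb (existT dpT 0%N (A, B)) [::] by apply/forallP => -[].
Qed.

Lemma unit_part w : coef (phi' (K := K) dp_empty) w = coef [:: (1, [::])] w.
Proof. by rewrite /phi' WLin_size0. Qed.

Lemma counit_part P : coef (phi' (K := K) P) [::] = (dsize P == 0%N)%:R.
Proof.
rewrite coef_phi'; case e: (dsize P) => [|m].
  by rewrite WLin_size0.
by rewrite mem_WLin e /= andbF.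
Qed.

Lemma psiphi_part P : is_wpp P -> forall w,
  coef (phi' (K := K) P) w = coef (lin psi (phi (K := K) P)) w.
Proof.
move=> wP w; rewrite coef_phi' coef_lin /phi sum_ones /=.
under eq_bigr => f _ do rewrite mul1r.
have e : \sum_(f <- Lin P) coef (psi (K := K) f) w =
         \sum_(f <- Lin P) (((w \in pwords (dsize P)) && precb w f) : bool)%:R.
  rewrite big_seq [RHS]big_seq; apply: eq_bigr => f.
  rewrite mem_Lin => /andP[_ /andP[_ /eqP sf]].
  have uF : uniq [seq g <- pwords (size f) | precb g f] by rewrite filter_uniq ?pwords_uniq.
  by rewrite /psi coef_ones count_uniq_mem // mem_filter sf andbC.
rewrite e sum_bool; congr (_%:R).
case pw: (w \in pwords (dsize P)).
  move: pw; rewrite mem_pwords => /andP[pw /eqP sw].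
  by rewrite (eq_count (a2 := precb w)) // count_prec // mem_WLin pw sw eqxx /= andbT.
rewrite mem_WLin -mem_pwords pw andbF.
by rewrite (@eq_count _ _ pred0) ?count_pred0.
Qed.

End Final.
Lemma le1_mul P Q (a b : 'I_(dsize P) + 'I_(dsize Q)) :
  le1 (dp_mul P Q) (unsplit a) (unsplit b) =
  match a, b with inl x, inl y => le1 P x y | inr x, inr y => le1 Q x y | _, _ => false end.
Proof. by rewrite /le1 /= inE /= !unsplitK. Qed.

Lemma le2_mul P Q (a b : 'I_(dsize P) + 'I_(dsize Q)) :
  le2 (dp_mul P Q) (unsplit a) (unsplit b) =
  match a, b with inl x, inl y => le2 P x y | inr x, inr y => le2 Q x y
   | inl _, inr _ => true | _, _ => false end.
Proof. by rewrite /le2 /= inE /= !unsplitK. Qed.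

Lemma qeq_mul_ll P Q (x y : 'I_(dsize P)) :
  qeq (dp_mul P Q) (unsplit (inl x)) (unsplit (inl y)) = qeq P x y.
Proof. by rewrite /qeq /qle !le1_mul !le2_mul. Qed.

Lemma qeq_mul_rr P Q (x y : 'I_(dsize Q)) :
  qeq (dp_mul P Q) (unsplit (inr x)) (unsplit (inr y)) = qeq Q x y.
Proof. by rewrite /qeq /qle !le1_mul !le2_mul. Qed.

Lemma wlinb_mul P Q w : wlinb (dp_mul P Q) w =
  wlinb P (take (dsize P) w) && wlinb Q (drop (dsize P) w).
Proof.
apply/forallP/andP => [h|[/forallP h1 /forallP h2] i].
  split; apply/forallP => x; apply/forallP => y.
    have := h (unsplit (inl x)) => /forallP/(_ (unsplit (inl y))).
    by rewrite le1_mul qeq_mul_ll /= !nth_take.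
  have := h (unsplit (inr x)) => /forallP/(_ (unsplit (inr y))).
  by rewrite le1_mul qeq_mul_rr /= !nth_drop.
apply/forallP => j; rewrite -(splitK i) -(splitK j).
case: (split i) => x; case: (split j) => y; rewrite le1_mul //=.
  by have := h1 x => /forallP/(_ y); rewrite qeq_mul_ll /= !nth_take.
by have := h2 x => /forallP/(_ y); rewrite qeq_mul_rr /= !nth_drop.
Qed.

Section Mult.
Variable K : nzRingType.
Local Open Scope ring_scope.

Lemma sum_tens_ones (B C : Type) (s : seq B) (t : seq C) (G : K * (B * C) -> K) :
  \sum_(p <- tens (ones K s) (ones K t)) G p = \sum_(a <- s) \sum_(b <- t) G (1, (a, b)).
Proof.
rewrite /tens big_allpairs_dep /ones big_map; apply: eq_bigr => a _.
by rewrite big_map; apply: eq_bigr => b _ /=; rewrite mulr1.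
Qed.

Lemma mult_part P Q : is_wpp P -> is_wpp Q -> forall w,
  coef (phi' (K := K) (dp_mul P Q)) w = coef (wmul (phi' P) (phi' Q)) w.
Proof.
move=> _ _ w; rewrite coef_phi' /wmul coef_lin /phi' sum_tens_ones /=.
under eq_bigr => a _ do under eq_bigr => b _ do rewrite mul1r.
set pt := pack (take (dsize P) w); set pd := pack (drop (dsize P) w).
set X := w \in pwords (dsize P + dsize Q).
have e : forall a b, a \in WLin P -> b \in WLin Q ->
   coef (ones K (wmul_list a b)) w = if pt == a then (if pd == b then X%:R else 0) else 0.
  move=> a b; rewrite !mem_WLin => /andP[_ /andP[_ /eqP sa]] /andP[_ /andP[_ /eqP sb]].
  have uF : uniq (wmul_list a b) by rewrite filter_uniq ?pwords_uniq.
  rewrite coef_ones count_uniq_mem // mem_filter sa sb -/X.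
  by rewrite -/pt -/pd; case: (pt == a); case: (pd == b).
rewrite big_seq; under eq_bigr => a aP do rewrite big_seq (eq_bigr _ (fun b bQ => e a b aP bQ)) -big_seq.
have e2 : forall a, \sum_(b <- WLin Q) (if pt == a then (if pd == b then (X%:R : K) else 0) else 0)
   = if pt == a then (if pd \in WLin Q then X%:R else 0) else 0.
  by move=> a; case: (pt == a); rewrite ?sum_if_uniq' ?WLin_uniq // big1.
under eq_bigr => a _ do rewrite e2.
rewrite -big_seq sum_if_uniq' ?WLin_uniq //.
rewrite /X; case: (boolP (w \in pwords (dsize P + dsize Q))) => hw; last first.
  have -> : (w \in WLin (dp_mul P Q)) = false.
    rewrite mem_WLin; apply/negbTE; move: hw; apply: contra => /andP[_ /andP[pw sw]].
    by rewrite mem_pwords pw; exact: sw.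
  by case: ifP => // _; case: ifP.
move: (hw); rewrite mem_pwords => /andP[pw /eqP sw].
have st : size (take (dsize P) w) = dsize P.
  rewrite size_take sw; case: ifP => // /negbT; rewrite -leqNgt => h; lia.
have sd : size (drop (dsize P) w) = dsize Q by rewrite size_drop sw addKn.
have -> : (w \in WLin (dp_mul P Q)) = wlinb P (take (dsize P) w) && wlinb Q (drop (dsize P) w).
  by rewrite mem_WLin wlinb_mul pw sw /= eqxx andbT.
rewrite !mem_WLin /pt /pd !packed_pack !size_pack st sd.
rewrite !wlinb_pack ?st ?sd // !eqxx /= !andbT.
by case: (wlinb P _); case: (wlinb Q _).
Qed.

End Mult.
Lemma max_filter_le w k : packed w -> k <= \max_(x <- w) x ->
  \max_(x <- [seq x <- w | (x <= k)%N]) x = k.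
Proof.
move=> pw hk; apply/eqP; rewrite eqn_leq; apply/andP; split.
  by apply/bigmax_leqP_seq => x; rewrite mem_filter => /andP[].
case: k hk => [|k] hk //.
have hm : k.+1 \in [seq x <- w | (x <= k.+1)%N].
  by rewrite mem_filter leqnn (packed_mem pw) -(packed_max pw) hk.
exact: (@leq_bigmax_seq _ _ xpredT (fun x => x) k.+1 hm).
Qed.

Lemma wdelta_count w u v : packed w ->
  count (pred1 (u, v)) [seq ([seq x <- w | (x <= k)%N], pack [seq x <- w | (k < x)%N])
                        | k <- iota 0 (\max_(x <- w) x).+1]
  = PR u v (\max_(x <- u) x) w.
Proof.
move=> pw; rewrite count_map /PR.
set K0 := \max_(x <- u) x.
set X := ([seq x <- w | (x <= K0)%N] == u) && (pack [seq x <- w | (K0 < x)%N] == v).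
have E : {in iota 0 (\max_(x <- w) x).+1,
   preim (fun k => ([seq x <- w | (x <= k)%N], pack [seq x <- w | (k < x)%N])) (pred1 (u, v))
   =1 fun k => (k == K0) && X}.
  move=> k; rewrite mem_iota add0n ltnS => /andP[_ hk] /=; rewrite xpair_eqE.
  apply/andP/andP => [[/eqP hu hv]|[/eqP -> h]]; last by apply/andP.
  have ek : K0 = k by rewrite /K0 -hu max_filter_le.
  by rewrite -ek eqxx /X; split => //; rewrite ek hu eqxx hv.
rewrite (eq_in_count E); case hX: X; last first.
  by rewrite andbF; apply/eqP; rewrite eqn0Ngt -has_count; apply/hasPn => k _; rewrite andbF.
rewrite andbT (eq_count (a2 := pred1 K0)); last by move=> k; rewrite andbT.
by rewrite count_uniq_mem ?iota_uniq // mem_iota add0n ltnS.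
Qed.

Section Comult2.
Variable K : nzRingType.
Local Open Scope ring_scope.

Lemma comult_part P : is_wpp P -> forall uv,
  coef (lin2 phi' phi' (dp_delta (K := K) P)) uv = coef (lin wdelta (phi' (K := K) P)) uv.
Proof.
move=> _ [u v].
rewrite /lin2 coef_lin /dp_delta sum_ones big_map.
under eq_bigr => O _ do rewrite /= mul1r coef_tens !coef_phi' -natrM mulnb.
rewrite sum_bool coef_lin /phi' sum_ones.
under eq_bigr => w _ do rewrite /= mul1r /wdelta coef_ones.
rewrite big_seq (eq_bigr (fun w => ((PR u v (\max_(x <- u) x) w) : bool)%:R)); last first.
  by move=> w; rewrite mem_WLin => /andP[_ /andP[pw _]]; rewrite wdelta_count.
rewrite -big_seq sum_bool; congr (_%:R).
exact: (@comult_count P u v (\max_(x <- u) x) (erefl _)).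
Qed.

End Comult2.
Section InjSurj.
Variable K : nzRingType.
Local Open Scope ring_scope.

Lemma coef_notin (B : eqType) (x : fsum K B) b : b \notin map snd x -> coef x b = 0.
Proof.
move=> nb; rewrite /coef big_seq_cond big1 // => p /andP[px /eqP e].
by rewrite -e (map_f snd px) in nb.
Qed.

Lemma inj_part (x : fsum K dposet) : all (fun p => is_wpp p.2) x ->
  (forall w, coef (lin phi' x) w = 0) -> forall P, coef x P = 0.
Proof.
move=> ax h0.
have xw : forall Q, Q \in map snd x -> is_wpp Q.
  by move=> Q /mapP[p px ->]; exact: (allP ax p px).
suff H : forall m P, (muP P < m)%N -> coef x P = 0 by move=> P; apply: (H (muP P).+1).
elim => [|m IH] P // hP.
case: (boolP (P \in map snd x)) => Px; last exact: coef_notin.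
have wP := xw P Px.
have := h0 (fP P); rewrite coef_lin (sum_regroup x (fun Q => coef (phi' (K := K) Q) (fP P))).
rewrite big_seq (eq_bigr (fun Q => if P == Q then coef x P else 0)); last first.
  move=> Q; rewrite mem_undup => Qx; have wQ := xw Q Qx.
  rewrite coef_phi'; case: (boolP (fP P \in WLin Q)) => hQ.
    case: (fP_minimal wP wQ hQ) => [->|lt]; first by rewrite eqxx /= mulr1n mulr1.
    rewrite IH; last by apply: leq_trans lt _; rewrite -ltnS.
    by rewrite mul0r; case: eqP => // e; rewrite e ltnn in lt.
  rewrite /= mulr0n mulr0; case: eqP => // e.
  by rewrite -e fP_WLin in hQ.
rewrite -big_seq sum_if_uniq' ?undup_uniq // mem_undup Px.
by move=> e.
Qed.

Definition scl (B : Type) (a : K) (x : fsum K B) : fsum K B := [seq (a * p.1, p.2) | p <- x].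

Lemma coef_lin_scl (B C : eqType) (f : B -> fsum K C) a x c :
  coef (lin f (scl a x)) c = a * coef (lin f x) c.
Proof. by rewrite !coef_lin big_map mulr_sumr; apply: eq_bigr => p _; rewrite mulrA. Qed.

Lemma coef_lin_cat (B C : eqType) (f : B -> fsum K C) x y c :
  coef (lin f (x ++ y)) c = coef (lin f x) c + coef (lin f y) c.
Proof. by rewrite !coef_lin big_cat. Qed.

Definition good (x : fsum K dposet) := all (fun p => is_wpp p.2) x.

Lemma good_scl a x : good (scl a x) = good x.
Proof. by rewrite /good all_map. Qed.

Lemma list_span (s : seq (seq nat)) :
  (forall g, g \in s -> exists2 x, good x & forall c, coef (lin phi' x) c = coef [:: (1, g)] c) ->
  exists2 x, good x & forall c, coef (lin phi' x) c = (count (pred1 c) s)%:R.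
Proof.
elim: s => [|g s IH] h.
  by exists [::] => // c; rewrite coef_lin big_nil.
have [xg gx hg] := h g (mem_head g s).
have h' : forall g', g' \in s ->
    exists2 x, good x & forall c, coef (lin phi' x) c = coef [:: (1, g')] c.
  by move=> g' hg'; apply: h; rewrite inE hg' orbT.
have [xs gs hs] := IH h'.
exists (xg ++ xs); first by rewrite /good all_cat; apply/andP; split; [exact: gx | exact: gs].
move=> c; rewrite coef_lin_cat hg hs coef_cons coef_nil addr0 /= natrD.
by case: (g == c).
Qed.

Lemma muw_bound n g : (muw n g <= n * n + n * n)%N.
Proof.
by rewrite /muw; apply: leq_add; apply: leq_trans (max_card _) _; rewrite card_prod card_ord.
Qed.

Lemma one_word d w : packed w ->
  ((size w * size w + size w * size w) - muw (size w) w < d)%N ->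
  exists2 x, good x & forall c, coef (lin phi' x) c = coef [:: (1, w)] c.
Proof.
elim: d w => [|d IH] w pw hd //.
pose S := [seq g <- WLin (Pw w) | g != w].
have hS : forall g, g \in S ->
    exists2 x, good x & forall c, coef (lin phi' x) c = coef [:: (1, g)] c.
  move=> g; rewrite mem_filter => /andP[ngw gW].
  have lt := Pw_minimal pw gW ngw.
  move: (gW); rewrite mem_WLin => /andP[_ /andP[pg /eqP sg]].
  apply: IH => //; rewrite sg /=.
  have := muw_bound (size w) g; have := muw_bound (size w) w; lia.
have [xS gS hS'] := list_span hS.
have wW : w \in WLin (Pw w) by rewrite mem_WLin Pw_wlin pw eqxx.
exists ([:: (1, Pw w)] ++ scl (-1) xS).
  by rewrite /good /= Pw_wpp /=; rewrite -/(good (scl (-1) xS)) good_scl.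
move=> c; rewrite coef_lin_cat coef_lin_scl hS' coef_lin big_seq1 /= mul1r coef_phi'.
rewrite coef_cons coef_nil addr0 /=.
case: (eqVneq c w) => [->|ne].
  have -> : count (pred1 w) S = 0%N by apply/count_memPn; rewrite mem_filter eqxx.
  by rewrite wW mulr0 addr0.
rewrite count_filter (eq_count (a2 := pred1 c)); last first.
  by move=> g /=; case: eqP => // ->; rewrite ne.
by rewrite count_uniq_mem ?WLin_uniq // mulN1r addrN.
Qed.

Lemma surj_part (y : fsum K (seq nat)) : all (fun p => packed p.2) y ->
  exists2 x, all (fun p => is_wpp p.2) x & forall w, coef (lin phi' x) w = coef y w.
Proof.
elim: y => [|[a w] y IH] /=.
  by exists [::] => // c; rewrite coef_lin big_nil coef_nil.
case/andP => pw /IH [xy gy hy].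
have [xw gw hw] := @one_word (size w * size w + size w * size w - muw (size w) w).+1 w pw (ltnSn _).
exists (scl a xw ++ xy); first by rewrite all_cat -/(good (scl a xw)) good_scl gw gy.
move=> c; rewrite coef_lin_cat coef_lin_scl hw hy !coef_cons coef_nil addr0 /=.
by case: (w == c); rewrite ?mulr1 ?mulr0.
Qed.

End InjSurj.

Unset Implicit Arguments.
Local Open Scope ring_scope.

Theorem mainTheorem7 (K : fieldType) :
  [/\
   (* phi' preserves the unit *)
   (forall w, coef (phi' (K := K) dp_empty) w = coef [:: (1, [::])] w),
   (* phi' preserves the counit *)
   (forall P, is_wpp P -> coef (phi' (K := K) P) [::] = (dsize P == 0%N)%:R),
   (* phi' is multiplicative *)
   (forall P Q, is_wpp P -> is_wpp Q -> forall w,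
      coef (phi' (K := K) (dp_mul P Q)) w = coef (wmul (phi' P) (phi' Q)) w) &
   (* phi' is comultiplicative: (phi' (x) phi') o Delta = Delta o phi' *)
   (forall P, is_wpp P -> forall uv,
      coef (lin2 phi' phi' (dp_delta (K := K) P)) uv = coef (lin wdelta (phi' (K := K) P)) uv)] /\
   (* phi' is bijective from H_WPP onto WQSym *)
   (
   (* phi' is injective on H_WPP *)
   (forall x : fsum K dposet, all (fun p => is_wpp p.2) x ->
      (forall w, coef (lin phi' x) w = 0) -> forall P, coef x P = 0) /\
   (* phi' is onto WQSym (span of packed words) *)
   (forall y : fsum K (seq nat), all (fun p => packed p.2) y ->
      exists2 x : fsum K dposet, all (fun p => is_wpp p.2) x &
        forall w, coef (lin phi' x) w = coef y w)) /\
   (* phi' = psi o phi *)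
   (forall P, is_wpp P -> forall w,
      coef (phi' (K := K) P) w = coef (lin psi (phi (K := K) P)) w).
Proof.
split.
  split.
  - by move=> w; apply: unit_part.
  - by move=> P _; apply: counit_part.
  - by move=> P Q wP wQ w; apply: mult_part.
  - by move=> P wP uv; apply: comult_part.
split.
  split.
  - by move=> x ax h0 P; apply: (inj_part ax h0).
  - by move=> y ay; apply: surj_part.
by move=> P wP w; apply: psiphi_part.
Qed.
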